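(* Let $H$ be a Hopf algebra (coproduct $\Delta h=h_{(1)}\otimes h_{(2)}$, counit $\epsilon$, antipode $S$) over a field $k$. Then $(H,\Omega^1H)$ has a quantum frame resolution with total space $P=H$, structure quantum group $k$ (so $M=H$), $V=\ker\epsilon\subset H$ with trivial coaction, and $\theta(v)=Sv_{(1)}\otimes v_{(2)}$. The (only possible connection $\omega=0$ and its) covariant derivative and torsion are given, for $\sum h\otimes g\in\Omega^1H$, by the restrictions to $\Omega^1H$ of the linear extensions of \[\nabla(h\otimes g)=1\otimes h\otimes g-hg_{(1)}\otimes Sg_{(2)}\otimes g_{(3)},\qquad T(h\otimes g)=h\otimes g\otimes1-h\otimes1\otimes g+hg_{(1)}\otimes Sg_{(2)}\otimes g_{(3)}.\]
   Context: For a unital algebra $A$, $\Omega^1A=\ker(\mu:A\otimes A\to A)$ with $da=1\otimes a-a\otimes1$, and $\Omega^1A\otimes_A\Omega^1A\subset A^{\otimes3}$, with $d(a\otimes b)=1\otimes a\otimes b-a\otimes1\otimes b+a\otimes b\otimes1$. A quantum frame resolution of $(M,\Omega^1M)$ consists of a quantum principal bundle ($P$ a right comodule algebra over a Hopf algebra $H'$ with invertible antipode, $M$ its coinvariants, $P$ flat over $M$, and $P\otimes_MP\to P\otimes H'$, $p\otimes p'\mapsto pp'^{(1)}\otimes p'^{(2)}$ bijective), a right $H'$-comodule $V$, and an $H'$-comodule map $\theta:V\to\Omega^1P$ with image in $P\Omega^1M$ such that $s_\theta:(P\otimes V)^{H'}\to\Omega^1M$, $\sum p_i\otimes v_i\mapsto\sum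 p_i\theta(v_i)$, is bijective. Given a left strong connection $\omega:H'\to\Omega^1P$ (here only $\omega=0$ is possible since $\ker\epsilon$ of $k$ is $0$), the covariant derivative is $\nabla(w)=1\otimes w-\sum_ip_i\otimes\theta(v_i)-\sum_ip_i{}^{(1)}\omega(p_i{}^{(2)})\theta(v_i)$ for $s_\theta^{-1}(w)=\sum_ip_i\otimes v_i$, and the torsion is $T=d-\nabla$. *)

(* Defs.v *)
(* Tensor products of (possibly infinite-dimensional) vector
   spaces are not in the library: they are given as explicit binders together
   with their universal property ([is_tensor]). Elements of tensor products are
   handled through finite lists of pairs (finite sums of pure tensors). *)
From HB Require Import structures.
From mathcomp Require Import all_boot all_order all_algebra.
Set Implicit Arguments. Unset Strict Implicit. Unset Printing Implicit Defensive.
Import Order.TTheory GRing.Theory Num.Theory.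
Local Open Scope ring_scope.

Section Defs.
Variable k : fieldType.

Definition is_lin (U W : lmodType k) (f : U -> W) : Prop :=
  forall (a : k) (x y : U), f (a *: x + y) = a *: f x + f y.

Definition is_bilin (U V W : lmodType k) (f : U -> V -> W) : Prop :=
  (forall u, is_lin (f u)) /\ (forall v, is_lin (fun u => f u v)).

Definition is_tensor (U V T : lmodType k) (t : U -> V -> T) : Prop :=
  is_bilin t /\
  forall (W : lmodType k) (f : U -> V -> W), is_bilin f ->
    exists g : T -> W, [/\ is_lin g, (forall u v, g (t u v) = f u v) &
      forall g' : T -> W, is_lin g' -> (forall u v, g' (t u v) = f u v) ->
        g' =1 g].

Variables (H : algType k) (T2 T3 : lmodType k)
  (t2 : H -> H -> T2) (t3' : T2 -> H -> T3).

Definition t3 (a b c : H) : T3 := t3' (t2 a b) c.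

Definition tsum2 (l : seq (H * H)) : T2 := \sum_(p <- l) t2 p.1 p.2.

(* The coproduct is given by a representation
   [cop h] of Delta h as a finite sum of pure tensors:
   Delta h = tsum2 (cop h) = h_(1) (x) h_(2).  Every Sweedler expression below
   is (bi)linear in the pairs, hence independent of the chosen representation. *)
Record is_hopf (cop : H -> seq (H * H)) (eps : H -> k) (S : H -> H) : Prop := {
  cop_lin : forall (a : k) (x y : H),
    tsum2 (cop (a *: x + y)) = a *: tsum2 (cop x) + tsum2 (cop y);
  cop_mul : forall x y : H, tsum2 (cop (x * y)) =
    \sum_(p <- cop x) \sum_(q <- cop y) t2 (p.1 * q.1) (p.2 * q.2);
  cop_one : tsum2 (cop 1) = t2 1 1;
  coassoc : forall x : H,
    \sum_(p <- cop x) \sum_(q <- cop p.1) t3 q.1 q.2 p.2 =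
    \sum_(p <- cop x) \sum_(q <- cop p.2) t3 p.1 q.1 q.2;
  eps_lin : forall (a : k) (x y : H), eps (a *: x + y) = a * eps x + eps y;
  eps_mul : forall x y : H, eps (x * y) = eps x * eps y;
  eps_one : eps 1 = 1;
  counit_l : forall x : H, \sum_(p <- cop x) eps p.1 *: p.2 = x;
  counit_r : forall x : H, \sum_(p <- cop x) eps p.2 *: p.1 = x;
  S_lin : is_lin S;
  antipode_l : forall x : H, \sum_(p <- cop x) S p.1 * p.2 = (eps x)%:A;
  antipode_r : forall x : H, \sum_(p <- cop x) p.1 * S p.2 = (eps x)%:A
}.

Variables (cop : H -> seq (H * H)) (eps : H -> k) (S : H -> H).

Definition theta (v : H) : T2 := \sum_(x <- cop v) t2 (S x.1) x.2.

(* r = [:: (p_i, v_i)] represents sum_i p_i (x) v_i in P (x) V, V = ker eps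
   (viewed inside H (x) H) *)
Definition inPV (r : seq (H * H)) : bool := all (fun z => eps z.2 == 0) r.

Definition s_theta (r : seq (H * H)) : T2 :=
  \sum_(z <- r) \sum_(x <- cop z.2) t2 (z.1 * S x.1) x.2.

Definition one_tens (l : seq (H * H)) : T3 := \sum_(z <- l) t3 1 z.1 z.2.

Definition p_tens_theta (r : seq (H * H)) : T3 :=
  \sum_(z <- r) \sum_(x <- cop z.2) t3 z.1 (S x.1) x.2.

(* nabla(w) = 1 (x) w - sum_i p_i (x) theta(v_i)  (omega = 0),
   where w = tsum2 l and s_theta^{-1}(w) is represented by r *)
Definition nabla_def (l r : seq (H * H)) : T3 := one_tens l - p_tens_theta r.

Definition d1 (l : seq (H * H)) : T3 :=
  \sum_(z <- l) (t3 1 z.1 z.2 - t3 z.1 1 z.2 + t3 z.1 z.2 1).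

Definition sw3 (h g : H) : T3 :=
  \sum_(x <- cop g) \sum_(y <- cop x.2) t3 (h * x.1) (S y.1) y.2.

Definition nabla_formula (l : seq (H * H)) : T3 :=
  \sum_(z <- l) (t3 1 z.1 z.2 - sw3 z.1 z.2).
Definition torsion_formula (l : seq (H * H)) : T3 :=
  \sum_(z <- l) (t3 z.1 z.2 1 - t3 z.1 1 z.2 + sw3 z.1 z.2).

End Defs.

(* Main.v *)
Require Import Defs.
From HB Require Import structures.
From mathcomp Require Import all_boot all_order all_algebra.
From Stdlib Require Import ClassicalEpsilon.

Import GRing.Theory.
Set Implicit Arguments. Unset Strict Implicit. Unset Printing Implicit Defensive.
Local Open Scope ring_scope.

Section Lin.
Variables (k : fieldType) (U W : lmodType k) (g : U -> W).
Hypothesis hg : is_lin g.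
Lemma lin0 : g 0 = 0.
Proof. by have := hg 1 0 0; rewrite scale1r addr0 => /esym/eqP; rewrite -subr_eq0 addrK scale1r => /eqP. Qed.
Lemma linD x y : g (x + y) = g x + g y.
Proof. by have := hg 1 x y; rewrite !scale1r. Qed.
Lemma linZ a x : g (a *: x) = a *: g x.
Proof. by have := hg a x 0; rewrite !addr0 lin0 addr0. Qed.
Lemma linN x : g (- x) = - g x.
Proof. by rewrite -scaleN1r linZ scaleN1r. Qed.
Lemma linB x y : g (x - y) = g x - g y.
Proof. by rewrite linD linN. Qed.
Lemma lin_sum (I : Type) (r : seq I) (F : I -> U) :
  g (\sum_(i <- r) F i) = \sum_(i <- r) g (F i).
Proof.
elim: r => [|i r IH]; first by rewrite !big_nil lin0.
by rewrite !big_cons linD IH.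
Qed.
End Lin.

Lemma is_lin_id (k : fieldType) (U : lmodType k) : is_lin (@id U).
Proof. by []. Qed.
Section Span.
Variables (k : fieldType) (U V T : lmodType k) (t : U -> V -> T).
Definition spanP (x : T) : Prop :=
  exists l : seq (k * U * V), x = \sum_(p <- l) p.1.1 *: t p.1.2 p.2.
Definition spanb : {pred T} := fun x =>
  if excluded_middle_informative (spanP x) then true else false.
Lemma spanbP x : reflect (spanP x) (x \in spanb).
Proof.
rewrite unfold_in /spanb; case: excluded_middle_informative => h; constructor => //.
Qed.
Lemma spanb_closed : subsemimod_closed spanb.
Proof.
split; [split|].
- by apply/spanbP; exists [::]; rewrite big_nil.
- move=> x y /spanbP[l1 ->] /spanbP[l2 ->]; apply/spanbP; exists (l1 ++ l2).
  by rewrite big_cat.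
- move=> a x /spanbP[l ->]; apply/spanbP.
  exists [seq ((a * p.1.1, p.1.2), p.2) | p <- l].
  rewrite big_map scaler_sumr; apply: eq_bigr => p _ /=. by rewrite scalerA.
Qed.
HB.instance Definition _ := GRing.isSubmodClosed.Build k T spanb spanb_closed.
Definition Sp := {x : T | x \in spanb}.
HB.instance Definition _ := [isSub of Sp for (@sval T (fun x => x \in spanb))].
HB.instance Definition _ := [Choice of Sp by <:].
HB.instance Definition _ := [SubChoice_isSubZmodule of Sp by <:].
HB.instance Definition _ := [SubZmodule_isSubLmodule of Sp by <:].
End Span.

Section Tensor.
Variables (k : fieldType) (U V T : lmodType k) (t : U -> V -> T).
Hypothesis ht : is_tensor t.

Lemma tens_span w : exists l : seq (U * V), w = \sum_(p <- l) t p.1 p.2.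
Proof.
have [[tl tr] univ] := ht.
have pf u v : t u v \in spanb t.
  by apply/spanbP; exists [:: (1, u, v)]; rewrite big_seq1 scale1r.
pose f u v : Sp t := Sub (t u v) (pf u v).
have fb : is_bilin f.
  split=> [u|v] a x y; apply: val_inj; rewrite raddfD /=; [exact: tl | exact: (tr v)].
have [g [gl gf _]] := univ (Sp t) f fb.
have [g0 [_ _ uniq]] := univ T t (conj tl tr).
have e1 := uniq id (@is_lin_id _ _) (fun _ _ => erefl).
have e2 : (fun x => val (g x)) =1 g0.
  apply: uniq; last by move=> u v; rewrite gf.
  by move=> a x y; rewrite gl raddfD.
have /spanbP[l hl] := valP (g w).
exists [seq (p.1.1 *: p.1.2, p.2) | p <- l].
rewrite (e1 w) -(e2 w) /= hl big_map; apply: eq_bigr => p _.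
by rewrite (linZ (tr _)).
Qed.
End Tensor.

Lemma tensor_ext (k : fieldType) (U V T W : lmodType k) (t : U -> V -> T)
  (g1 g2 : T -> W) : is_tensor t -> is_lin g1 -> is_lin g2 ->
  (forall u v, g1 (t u v) = g2 (t u v)) -> g1 =1 g2.
Proof.
move=> [[tl tr] univ] l1 l2 e.
have bil : is_bilin (fun u v => g2 (t u v)).
  split=> [u|v] a x y /=.
    by have -> : t u (a *: x + y) = a *: t u x + t u y := tl u a x y; apply: l2.
  by have -> : t (a *: x + y) v = a *: t x v + t y v := tr v a x y; apply: l2.
have [g [_ _ uq]] := univ W _ bil.
by move=> x; rewrite (uq g1 l1 e) (uq g2 l2 (fun _ _ => erefl)).
Qed.

Lemma lift2 (k : fieldType) (U V T W : lmodType k) (t : U -> V -> T)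
  (f : U -> V -> W) : is_tensor t -> is_bilin f ->
  exists g : T -> W, is_lin g /\ forall u v, g (t u v) = f u v.
Proof. by move=> [_ univ] fb; have [g [gl gf _]] := univ W f fb; exists g. Qed.

Lemma mulZl (k : fieldType) (A : algType k) (a : k) (x y : A) : (a *: x) * y = a *: (x * y).
Proof. by rewrite scalerAl. Qed.
Lemma mulZr (k : fieldType) (A : algType k) (a : k) (x y : A) : x * (a *: y) = a *: (x * y).
Proof. by rewrite scalerAr. Qed.

Section Hopf.
Variables (k : fieldType) (H : algType k) (T2 T3 : lmodType k)
  (t2 : H -> H -> T2) (t3' : T2 -> H -> T3)
  (cop : H -> seq (H * H)) (eps : H -> k) (S : H -> H).
Hypotheses (ht2 : is_tensor t2) (ht3 : is_tensor t3')
  (hh : is_hopf t2 t3' cop eps S).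
Local Notation t3 := (t3 t2 t3').
Local Notation tsum2 := (tsum2 t2).

Lemma t2D1 x y b : t2 (x + y) b = t2 x b + t2 y b.
Proof. exact: (linD (ht2.1.2 b)). Qed.
Lemma t2Z1 a x b : t2 (a *: x) b = a *: t2 x b.
Proof. exact: (linZ (ht2.1.2 b)). Qed.
Lemma t2D2 b x y : t2 b (x + y) = t2 b x + t2 b y.
Proof. exact: (linD (ht2.1.1 b)). Qed.
Lemma t2Z2 a b x : t2 b (a *: x) = a *: t2 b x.
Proof. exact: (linZ (ht2.1.1 b)). Qed.
Lemma t2sum1 I (r : seq I) F b : t2 (\sum_(i <- r) F i) b = \sum_(i <- r) t2 (F i) b.
Proof. exact: (lin_sum (ht2.1.2 b)). Qed.
Lemma t2sum2 I (r : seq I) F b : t2 b (\sum_(i <- r) F i) = \sum_(i <- r) t2 b (F i).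
Proof. exact: (lin_sum (ht2.1.1 b)). Qed.
Lemma t3D1 x y b c : t3 (x + y) b c = t3 x b c + t3 y b c.
Proof. by rewrite /Defs.t3 t2D1 (linD (ht3.1.2 c)). Qed.
Lemma t3Z1 a x b c : t3 (a *: x) b c = a *: t3 x b c.
Proof. by rewrite /Defs.t3 t2Z1 (linZ (ht3.1.2 c)). Qed.
Lemma t3D2 x y b c : t3 b (x + y) c = t3 b x c + t3 b y c.
Proof. by rewrite /Defs.t3 t2D2 (linD (ht3.1.2 c)). Qed.
Lemma t3Z2 a x b c : t3 b (a *: x) c = a *: t3 b x c.
Proof. by rewrite /Defs.t3 t2Z2 (linZ (ht3.1.2 c)). Qed.
Lemma t3D3 x y b c : t3 b c (x + y) = t3 b c x + t3 b c y.
Proof. exact: (linD (ht3.1.1 _)). Qed.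
Lemma t3Z3 a x b c : t3 b c (a *: x) = a *: t3 b c x.
Proof. exact: (linZ (ht3.1.1 _)). Qed.
Lemma SD x y : S (x + y) = S x + S y.
Proof. exact: (linD (S_lin hh)). Qed.
Lemma SZ a x : S (a *: x) = a *: S x.
Proof. exact: (linZ (S_lin hh)). Qed.

Ltac linsimp := rewrite ?(SD, SZ, mulrDl, mulrDr, mulZl, mulZr, t2D1, t2Z1,
  t2D2, t2Z2, t3D1, t3Z1, t3D2, t3Z2, t3D3, t3Z3).

Lemma copL (W : lmodType k) (f : H -> H -> W) :
  is_bilin f -> is_lin (fun v => \sum_(p <- cop v) f p.1 p.2).
Proof.
move=> fb; have [g [gl gf]] := lift2 ht2 fb.
have E v : \sum_(p <- cop v) f p.1 p.2 = g (tsum2 (cop v)).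
  by rewrite /Defs.tsum2 (lin_sum gl); apply: eq_bigr => p _; rewrite gf.
by move=> a x y /=; rewrite !E (cop_lin hh) gl.
Qed.

Lemma cop1 (W : lmodType k) (f : H -> H -> W) :
  is_bilin f -> \sum_(p <- cop 1) f p.1 p.2 = f 1 1.
Proof.
move=> fb; have [g [gl gf]] := lift2 ht2 fb.
have E v : \sum_(p <- cop v) f p.1 p.2 = g (tsum2 (cop v)).
  by rewrite /Defs.tsum2 (lin_sum gl); apply: eq_bigr => p _; rewrite gf.
by rewrite E (cop_one hh) gf.
Qed.

Definition trilin (W : lmodType k) (f : H -> H -> H -> W) :=
  [/\ forall b c, is_lin (fun a => f a b c), forall a c, is_lin (fun b => f a b c)
    & forall a b, is_lin (f a b)].

Lemma lift3 (W : lmodType k) (f : H -> H -> H -> W) : trilin f ->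
  exists g : T3 -> W, is_lin g /\ forall a b c, g (t3 a b c) = f a b c.
Proof.
case=> f1 f2 f3.
have gc c : {g : T2 -> W | is_lin g /\ forall a b, g (t2 a b) = f a b c}.
  apply: constructive_indefinite_description.
  exact: (lift2 ht2 (conj (fun a => f2 a c) (fun b => f1 b c))).
pose F u c := sval (gc c) u.
have Fb : is_bilin F.
  split=> [u|c]; last exact: (proj1 (svalP (gc c))).
  move=> a c c'; rewrite /F.
  have := @tensor_ext k H H T2 W t2 (sval (gc (a *: c + c')))
     (fun u => a *: sval (gc c) u + sval (gc c') u) ht2.
  apply.
  - exact: (proj1 (svalP (gc _))).
  - move=> b x y /=.
    rewrite (linD (proj1 (svalP (gc c)))) (linZ (proj1 (svalP (gc c)))).
    rewrite (linD (proj1 (svalP (gc c')))) (linZ (proj1 (svalP (gc c')))).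
    by rewrite !scalerDr !scalerA addrACA [a * b]mulrC.


  - move=> x y; rewrite !(proj2 (svalP (gc _))).
    exact: f3.
have [g [gl gf]] := lift2 ht3 Fb.
exists g; split=> // a b c; rewrite /Defs.t3 gf /F.
exact: (proj2 (svalP (gc c))).
Qed.

Lemma coassocF (W : lmodType k) (f : H -> H -> H -> W) : trilin f -> forall x,
  \sum_(p <- cop x) \sum_(q <- cop p.1) f q.1 q.2 p.2 =
  \sum_(p <- cop x) \sum_(q <- cop p.2) f p.1 q.1 q.2.
Proof.
move=> tf x; have [g [gl gf]] := lift3 tf.
have := congr1 g (coassoc hh x).
rewrite !(lin_sum gl).
rewrite (eq_bigr _ (fun p _ => lin_sum gl _ _)).
rewrite [in X in _ = X -> _](eq_bigr _ (fun p _ => lin_sum gl _ _)).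
move=> E; rewrite -[LHS](eq_bigr _ (fun p _ => eq_bigr _ (fun q _ => gf _ _ _))).
by rewrite E; apply: eq_bigr => p _; apply: eq_bigr => q _; rewrite gf.
Qed.


Lemma t3sum1 I (r : seq I) F b c : t3 (\sum_(i <- r) F i) b c = \sum_(i <- r) t3 (F i) b c.
Proof. by rewrite /Defs.t3 t2sum1 (lin_sum (ht3.1.2 c)). Qed.

Lemma counitL (W : lmodType k) (L : H -> W) : is_lin L -> forall x,
  \sum_(p <- cop x) eps p.1 *: L p.2 = L x.
Proof.
move=> hL x; rewrite -[in RHS](counit_l hh x) (lin_sum hL).
by apply: eq_bigr => p _; rewrite (linZ hL).
Qed.
Lemma counitR (W : lmodType k) (L : H -> W) : is_lin L -> forall x,
  \sum_(p <- cop x) eps p.2 *: L p.1 = L x.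
Proof.
move=> hL x; rewrite -[in RHS](counit_r hh x) (lin_sum hL).
by apply: eq_bigr => p _; rewrite (linZ hL).
Qed.

Lemma S1 : S 1 = 1.
Proof.
have := antipode_l hh 1.
rewrite (cop1 (f := fun a b => S a * b)); last first.
  by split=> [u|v] a x y /=; linsimp.
by rewrite (eps_one hh) scale1r mulr1.
Qed.

Lemma key1 h v : \sum_(x <- cop v) \sum_(y <- cop x.2) t2 (h * S x.1 * y.1) y.2
  = t2 h v.
Proof.
rewrite -(coassocF (f := fun a b c => t2 (h * S a * b) c)); last first.
  by split=> [b c|a c|a b] s x y /=; linsimp.
transitivity (\sum_(x <- cop v) eps x.1 *: t2 h x.2); last exact: (counitL (ht2.1.1 h)).
apply: eq_bigr => x _.
rewrite -t2Z1 -mulr_algr -(antipode_l hh) mulr_sumr t2sum1.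
by apply: eq_bigr => q _; rewrite mulrA.
Qed.

Lemma key2 h v : \sum_(x <- cop v) \sum_(y <- cop x.2) t2 (h * x.1 * S y.1) y.2
  = t2 h v.
Proof.
rewrite -(coassocF (f := fun a b c => t2 (h * a * S b) c)); last first.
  by split=> [b c|a c|a b] s x y /=; linsimp.
transitivity (\sum_(x <- cop v) eps x.1 *: t2 h x.2); last exact: (counitL (ht2.1.1 h)).
apply: eq_bigr => x _.
rewrite -t2Z1 -mulr_algr -(antipode_r hh) mulr_sumr t2sum1.
by apply: eq_bigr => q _; rewrite mulrA.
Qed.

Lemma key3 h v : \sum_(x <- cop v) sw3 t2 t3' cop S (h * S x.1) x.2
  = \sum_(x <- cop v) t3 h (S x.1) x.2.
Proof.
rewrite /sw3.
rewrite -(coassocF (f := fun a b c => \sum_(w <- cop c) t3 (h * S a * b) (S w.1) w.2)); last first.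
  split=> [b c|a c|a b].
  - by move=> s x y /=; rewrite scaler_sumr -big_split; apply: eq_bigr => w _; linsimp.
  - by move=> s x y /=; rewrite scaler_sumr -big_split; apply: eq_bigr => w _; linsimp.
  - by apply: (copL (f := fun p q => t3 (h * S a * b) (S p) q)); split=> [u|u'] s x y /=; linsimp.
have bil : is_bilin (fun p q => t3 h (S p) q) by split=> [u|u'] s x y /=; linsimp.
transitivity (\sum_(x <- cop v) eps x.1 *: \sum_(w <- cop x.2) t3 h (S w.1) w.2);
  last exact: (counitL (copL bil)).
apply: eq_bigr => x _; rewrite exchange_big scaler_sumr; apply: eq_bigr => w _.
rewrite -t3Z1 -mulr_algr -(antipode_l hh) mulr_sumr t3sum1.
by apply: eq_bigr => q _; rewrite mulrA.
Qed.


Lemma zid (V : zmodType) (A B C D : V) : (A - B + C) - (A - D) = C - B + D.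
Proof. by rewrite opprB addrC !addrA subrK [LHS]addrC [RHS]addrAC addrA. Qed.

Variables (mu : T2 -> H).
Hypotheses (hmu : is_lin mu) (hmut : forall a b, mu (t2 a b) = a * b).

Lemma mu_tsum l : mu (tsum2 l) = \sum_(z <- l) z.1 * z.2.
Proof. by rewrite /Defs.tsum2 (lin_sum hmu); apply: eq_bigr => z _; exact: hmut. Qed.

Lemma nab l r : s_theta t2 cop S r = tsum2 l ->
  p_tens_theta t2 t3' cop S r = \sum_(z <- l) sw3 t2 t3' cop S z.1 z.2.
Proof.
move=> e.
have bil : is_bilin (fun h g => sw3 t2 t3' cop S h g).
  split=> [h|g].
  - have bil2 : is_bilin (fun a b => \sum_(y <- cop b) t3 (h * a) (S y.1) y.2).
      split=> [u|u'].
      + by apply: (copL (f := fun c d => t3 (h * u) (S c) d)); split=> [w|w'] s x y /=; linsimp.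
      + by move=> s x y /=; rewrite scaler_sumr -big_split; apply: eq_bigr => w _; linsimp.
    exact: (copL bil2).
  - move=> a x y /=; rewrite /sw3 scaler_sumr -big_split; apply: eq_bigr => p _.
    by rewrite scaler_sumr -big_split; apply: eq_bigr => q _; linsimp.
have [psi [psil psie]] := lift2 ht2 bil.
transitivity (psi (s_theta t2 cop S r)).
  rewrite /s_theta (lin_sum psil) /p_tens_theta; apply: eq_bigr => z _.
  by rewrite (lin_sum psil) (eq_bigr _ (fun x _ => psie _ _)) key3.
rewrite e /Defs.tsum2 (lin_sum psil); apply: eq_bigr => z _; exact: psie.
Qed.

Lemma main_res :
  [/\
    (forall (a : k) (v v' : H), eps v = 0 -> eps v' = 0 ->
       theta t2 cop S (a *: v + v') =
       a *: theta t2 cop S v + theta t2 cop S v'),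
    (forall v : H, eps v = 0 -> mu (theta t2 cop S v) = 0),
    [/\ (forall r, inPV eps r -> mu (s_theta t2 cop S r) = 0),
        (forall r r', inPV eps r -> inPV eps r' ->
           s_theta t2 cop S r = s_theta t2 cop S r' -> tsum2 r = tsum2 r') &
        (forall w : T2, mu w = 0 ->
           exists2 r, inPV eps r & s_theta t2 cop S r = w)],
    (forall l r, mu (tsum2 l) = 0 -> inPV eps r ->
       s_theta t2 cop S r = tsum2 l ->
       nabla_def t2 t3' cop S l r = nabla_formula t2 t3' cop S l) &
    (forall l r, mu (tsum2 l) = 0 -> inPV eps r ->
       s_theta t2 cop S r = tsum2 l ->
       d1 t2 t3' l - nabla_def t2 t3' cop S l r = torsion_formula t2 t3' cop S l)].
Proof.
have Nab l r : s_theta t2 cop S r = tsum2 l ->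
    nabla_def t2 t3' cop S l r = nabla_formula t2 t3' cop S l.
  move=> e; rewrite /nabla_def /nabla_formula sumrB /one_tens (nab e) //.
split.
- move=> a v v' _ _; rewrite /theta.
  have bil : is_bilin (fun a b => t2 (S a) b) by split=> [u|u'] s x y /=; linsimp.
  exact: (copL bil a v v').
- move=> v ev; rewrite /theta (lin_sum hmu) (eq_bigr _ (fun x _ => hmut _ _)).
  by rewrite (antipode_l hh) ev scale0r.
- split.
  + move=> r hr; rewrite /s_theta (lin_sum hmu) big1_seq // => z zr.
    have ez : eps z.2 = 0 by apply/eqP; exact: (allP hr z zr).
    rewrite (lin_sum hmu) (eq_bigr _ (fun x _ => hmut _ _)).
    rewrite (eq_bigr (fun x => z.1 * (S x.1 * x.2))); last by move=> x _; rewrite mulrA.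
    by rewrite -mulr_sumr (antipode_l hh) ez scale0r mulr0.
  + have bil : is_bilin (fun h g => \sum_(x <- cop g) t2 (h * x.1) x.2).
      split=> [h|g].
      * by apply: (copL (f := fun a b => t2 (h * a) b)); split=> [u|u'] s x y /=; linsimp.
      * by move=> a x y /=; rewrite scaler_sumr -big_split; apply: eq_bigr => w _; linsimp.
    have [phi [phil phie]] := lift2 ht2 bil.
    have phis r : phi (s_theta t2 cop S r) = tsum2 r.
      rewrite /s_theta /Defs.tsum2 (lin_sum phil); apply: eq_bigr => z _.
      rewrite (lin_sum phil) -[RHS](key1 z.1 z.2); apply: eq_bigr => x _.
      by rewrite phie.
    by move=> r r' _ _ e; rewrite -!phis e.
  + move=> w hw; have [l El] := tens_span ht2 w.
    have hl : mu (tsum2 l) = 0 by rewrite /Defs.tsum2 -El.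
    rewrite El -/(tsum2 l).
    pose R := flatten [seq [seq (z.1 * x.1, x.2 - (eps x.2)%:A) | x <- cop z.2] | z <- l].
    have Ex (x : H) : x - (eps x)%:A = (- eps x) *: 1 + x by rewrite addrC scaleNr.
    exists R.
      rewrite /inPV /R; apply/allP => p /flattenP [s /mapP [z _ ->] /mapP [x _ ->]] /=.
      by rewrite Ex (eps_lin hh) (eps_one hh) mulr1 addNr.
    rewrite /s_theta /R big_flatten big_map /=.
    transitivity (\sum_(z <- l) (t2 z.1 z.2 - t2 (z.1 * z.2) 1)).
      apply: eq_bigr => z _; rewrite big_map /=.
      have E (x : H * H) : \sum_(y <- cop (x.2 - (eps x.2)%:A)) t2 (z.1 * x.1 * S y.1) y.2
         = \sum_(y <- cop x.2) t2 (z.1 * x.1 * S y.1) y.2 - eps x.2 *: t2 (z.1 * x.1) 1.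
        have bil : is_bilin (fun a b => t2 (z.1 * x.1 * S a) b).
          by split=> [u|u'] s p q /=; linsimp.
        have := copL bil (- eps x.2) 1 x.2; rewrite /= -Ex => ->.
        rewrite (cop1 bil) S1 mulr1 scaleNr addrC //.
      rewrite (eq_bigr _ (fun x _ => E x)) sumrB key2; congr (_ - _).
      have lin : is_lin (fun m => t2 (z.1 * m) 1) by move=> s p q /=; linsimp.
      exact: (counitR lin).
    rewrite sumrB -t2sum1 -mu_tsum hl (lin0 (ht2.1.2 1)) subr0 //.
- move=> l r _ _ e; exact: Nab.
- move=> l r _ _ e; rewrite Nab // /d1 /nabla_formula /torsion_formula -sumrB.
  by apply: eq_bigr => z _; rewrite zid.
Qed.

End Hopf.

Unset Implicit Arguments.

Theorem proposition4p1 (k : fieldType) (H : algType k) (T2 T3 : lmodType k)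
  (t2 : H -> H -> T2) (t3' : T2 -> H -> T3)
  (cop : H -> seq (H * H)) (eps : H -> k) (S : H -> H) (mu : T2 -> H) :
  is_tensor t2 -> is_tensor t3' -> is_hopf t2 t3' cop eps S ->
  (* mu : H (x) H -> H the multiplication; Omega^1 H = ker mu *)
  is_lin mu -> (forall a b : H, mu (t2 a b) = a * b) ->
  [/\
    (* theta : V -> Omega^1 P is linear, with image in P Omega^1 M = Omega^1 H *)
    (forall (a : k) (v v' : H), eps v = 0 -> eps v' = 0 ->
       theta t2 cop S (a *: v + v') =
       a *: theta t2 cop S v + theta t2 cop S v'),
    (forall v : H, eps v = 0 -> mu (theta t2 cop S v) = 0),
    (* s_theta : P (x) V -> Omega^1 M is a bijection *)
    [/\ (forall r, inPV eps r -> mu (s_theta t2 cop S r) = 0),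
        (forall r r', inPV eps r -> inPV eps r' ->
           s_theta t2 cop S r = s_theta t2 cop S r' -> tsum2 t2 r = tsum2 t2 r') &
        (forall w : T2, mu w = 0 ->
           exists2 r, inPV eps r & s_theta t2 cop S r = w)],
    (* covariant derivative *)
    (forall l r, mu (tsum2 t2 l) = 0 -> inPV eps r ->
       s_theta t2 cop S r = tsum2 t2 l ->
       nabla_def t2 t3' cop S l r = nabla_formula t2 t3' cop S l) &
    (* torsion T = d - nabla *)
    (forall l r, mu (tsum2 t2 l) = 0 -> inPV eps r ->
       s_theta t2 cop S r = tsum2 t2 l ->
       d1 t2 t3' l - nabla_def t2 t3' cop S l r = torsion_formula t2 t3' cop S l)].
Proof.
move=> ht2 ht3 hh hmu hmut.
exact: (main_res ht2 ht3 hh hmu hmut).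
Qed.
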